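(* Let $D$ be a square-free integer, $p$ an odd prime, $k,\ell$ positive integers and $c_D$ a positive integer with $\gcd(c_D k, p) = 1$. Let $N = c_D k p^{\ell} - 1$ be an odd integer such that $c_D k < p^{\ell}$ and the Jacobi symbol satisfies $\left(\frac{D}{N}\right) = -1$. Suppose that there exists an element $w \in \mathcal{G}_N(D)$ such that $w^{\frac{N+1}{p}} \not\equiv 1 \pmod{N}$. Then $N$ is prime if and only if $$\Phi_p\left(w^{\frac{N+1}{p}}\right) \equiv 0 \pmod{N},$$ where $\Phi_p(x)$ denotes the $p$-th cyclotomic polynomial.
   Context: For an integer $n \ge 2$ and a square-free integer $D$: if $D \equiv 2,3 \pmod 4$, let $\mathcal{I}_n(D) = \{a + b\sqrt{D} : a,b \in \mathbb{Z}/n\mathbb{Z}\}$ (the ring $\mathbb{Z}[\sqrt D]/n\mathbb{Z}[\sqrt D]$) and $\mathcal{G}_n(D) = \{a + b\sqrt{D} \in \mathcal{I}_n(D) : a^2 - Db^2 \equiv 1 \pmod n\}$; if $D \equiv 1 \pmod 4$, let $\omega = \frac{1+\sqrt D}{2}$, $\mathcal{I}_n(D) = \{a + b\omega : a,b \in \mathbb{Z}/n\mathbb{Z}\}$ (the ring $\mathbb{Z}[\omega]/n\mathbb{Z}[\omega]$) and $\mathcal{G}_n(D) = \{a + b\omega \in \mathcal{I}_n(D) : a^2 + ab + \frac{1-D}{4} b^2 \equiv 1 \pmod n\}$. In both cases $\mathcal{I}_n(D)$ is the quotient ring $\mathcal{O}_L/n\mathcal{O}_L$ for $L=\mathbb{Q}(\sqrt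 D)$, $\mathcal{G}_n(D)$ is a multiplicative group, powers are computed in $\mathcal{I}_n(D)$, and a congruence $x \equiv y \pmod n$ for $x,y \in \mathcal{I}_n(D)$ means $x = y$ in $\mathcal{I}_n(D)$; polynomials such as $\Phi_p$ are evaluated in $\mathcal{I}_n(D)$. *)

(* Defs.v *)
From mathcomp Require Import all_boot all_order all_algebra all_field.
Set Implicit Arguments. Unset Strict Implicit. Unset Printing Implicit Defensive.
Import Order.TTheory GRing.Theory Num.Theory.
Local Open Scope ring_scope.

(* Square-free integer: no square of a prime divides D (this excludes D = 0). *)
Definition squarefree_int (D : int) : Prop :=
  forall p : nat, prime p -> ~ ((p * p)%N %| D)%Z.

Definition legendre (a : int) (p : nat) : int :=
  if (p %| a)%Z then 0
  else if [exists x : 'I_p, ((x%:Z) ^+ 2 == a %[mod p])%Z] then 1 else -1.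

Definition jacobi (a : int) (n : nat) : int :=
  \prod_(q <- primes n) legendre a q ^+ logn q n.

(* Elements of I_n(D) = O_L / n O_L, represented by integer pairs (a, b)
   standing for a + b*sqrt D (D = 2,3 mod 4) or a + b*omega (D = 1 mod 4),
   omega = (1 + sqrt D)/2; equality in I_n(D) is componentwise congruence mod n. *)
Definition Ielt := (int * int)%type.

Definition D1mod4 (D : int) : bool := (D %% 4 == 1)%Z.

Definition Imul (D : int) (x y : Ielt) : Ielt :=
  let: (a, b) := x in let: (c, d) := y in
  if D1mod4 D then (a * c + b * d * ((D - 1) %/ 4)%Z, a * d + b * c + b * d)
  else (a * c + D * b * d, a * d + b * c).

Definition Iadd (x y : Ielt) : Ielt := (x.1 + y.1, x.2 + y.2).

Definition Ielt_one : Ielt := (1, 0).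
Definition Ielt_zero : Ielt := (0, 0).

Definition Ipow (D : int) (x : Ielt) (e : nat) : Ielt := iter e (Imul D x) Ielt_one.

Definition Iscale (c : int) (x : Ielt) : Ielt := (c * x.1, c * x.2).

Definition Ieval (D : int) (q : {poly int}) (x : Ielt) : Ielt :=
  foldr Iadd Ielt_zero [seq Iscale q`_i (Ipow D x i) | i <- iota 0 (size q)].

Definition Icong (n : nat) (x y : Ielt) : Prop :=
  (x.1 = y.1 %[mod n])%Z /\ (x.2 = y.2 %[mod n])%Z.

Definition Inorm (D : int) (x : Ielt) : int :=
  let: (a, b) := x in
  if D1mod4 D then a ^+ 2 + a * b + ((1 - D) %/ 4)%Z * b ^+ 2
  else a ^+ 2 - D * b ^+ 2.

Definition inG (n : nat) (D : int) (w : Ielt) : Prop :=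
  (Inorm D w = 1 %[mod n])%Z.

(* Main.v *)
Require Import Defs.
From HB Require Import structures.
From mathcomp Require Import all_boot all_order all_algebra all_field.
From mathcomp Require Import ring zify cyclic.
Set Implicit Arguments. Unset Strict Implicit. Unset Printing Implicit Defensive.
Import Order.TTheory GRing.Theory Num.Theory.
Local Open Scope ring_scope.

Definition QR (F : comNzRingType) (c0 c1 : F) : Type := (F * F)%type.
Section QRing.
Variables (F : comNzRingType) (c0 c1 : F).
Local Notation Q := (QR c0 c1).
HB.instance Definition _ := GRing.Zmodule.on Q.
Definition qmul (x y : Q) : Q :=
  (x.1*y.1 + c0*x.2*y.2, x.1*y.2 + x.2*y.1 + c1*x.2*y.2).
Definition qone : Q := (1, 0).
Lemma qmulA : associative qmul.
Proof. move=> [a b] [c d] [e f]; rewrite /qmul /=; congr pair => /=; ring. Qed.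
Lemma qmulC : commutative qmul.
Proof. move=> [a b] [c d]; rewrite /qmul /=; congr pair => /=; ring. Qed.
Lemma qmul1 : left_id qone qmul.
Proof. move=> [a b]; rewrite /qmul /=; congr pair => /=; ring. Qed.
Lemma qmulDl : left_distributive qmul +%R.
Proof. move=> [a b] [c d] [e f]; rewrite /qmul /=; congr pair => /=; ring. Qed.
Lemma qone_neq0 : qone != 0.
Proof. apply/negP=> /eqP [] /eqP; by rewrite oner_eq0. Qed.
HB.instance Definition _ := GRing.Zmodule_isComNzRing.Build Q qmulA qmulC qmul1 qmulDl qone_neq0.

Definition sc (a : F) : Q := (a, 0).
Lemma qmulE (x y : Q) : x * y = (x.1*y.1 + c0*x.2*y.2, x.1*y.2 + x.2*y.1 + c1*x.2*y.2).
Proof. by []. Qed.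
Lemma qoneE : (1 : Q) = (1, 0). Proof. by []. Qed.
Lemma qaddE (x y : Q) : x + y = (x.1 + y.1, x.2 + y.2). Proof. by []. Qed.
Lemma qoppE (x : Q) : - x = (- x.1, - x.2). Proof. by []. Qed.
Lemma qzeroE : (0 : Q) = (0, 0). Proof. by []. Qed.
Lemma scM a b : sc (a * b) = sc a * sc b.
Proof. rewrite [RHS]qmulE /sc /=. congr pair; ring. Qed.
Lemma scD a b : sc (a + b) = sc a + sc b.
Proof. rewrite [RHS]qaddE /sc. congr pair. by rewrite /= addr0. Qed.
Lemma scN a : sc (- a) = - sc a.
Proof. rewrite [RHS]qoppE /sc. congr pair. by rewrite /= oppr0. Qed.
Lemma sc1 : sc 1 = 1. Proof. by []. Qed.
Lemma sc0 : sc 0 = 0. Proof. by []. Qed.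
Lemma scB a b : sc (a - b) = sc a - sc b.
Proof. by rewrite scD scN. Qed.
Lemma scX a n : sc (a ^+ n) = sc a ^+ n.
Proof. elim: n => [|n IH]; first by rewrite !expr0. by rewrite !exprS scM IH. Qed.
Lemma scn n : sc n%:R = n%:R.
Proof. elim: n => [|n IH]; first by rewrite !mulr0n sc0. by rewrite !mulrS scD IH sc1. Qed.
Lemma sc_inj a b : sc a = sc b -> a = b.
Proof. by case. Qed.
End QRing.


Definition cc0 (D : int) : int := if D1mod4 D then ((D - 1) %/ 4)%Z else D.
Definition cc1 (D : int) : int := if D1mod4 D then 1 else 0.

Section Phi.
Variables (F : comNzRingType) (D : int).
Definition RD := @QR F (cc0 D)%:~R (cc1 D)%:~R.
Definition phi (x : Ielt) : RD := (x.1%:~R, x.2%:~R).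

Lemma phiM x y : phi (Imul D x y) = phi x * phi y.
Proof.
case: x y => [a b] [c d]; rewrite [RHS]qmulE /phi /Imul /cc0 /cc1 /=.
case: (D1mod4 D); congr pair; rewrite ?rmorphD ?rmorphM ?rmorph1 ?rmorph0 /=; ring.
Qed.
Lemma phiA x y : phi (Iadd x y) = phi x + phi y.
Proof. case: x y => [a b] [c d]; rewrite [RHS]qaddE /phi /Iadd /=. by rewrite !rmorphD. Qed.
Lemma phiS c x : phi (Iscale c x) = sc _ _ (c%:~R) * phi x.
Proof. case: x => [a b]; rewrite [RHS]qmulE /phi /Iscale /sc /=. congr pair; rewrite !rmorphM /=; ring. Qed.
Lemma phi1 : phi Ielt_one = 1.
Proof. rewrite /phi /= qoneE. by rewrite rmorph1 rmorph0. Qed.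
Lemma phi0 : phi Ielt_zero = 0.
Proof. rewrite /phi /= qzeroE. by rewrite rmorph0. Qed.
Lemma phiX x e : phi (Ipow D x e) = phi x ^+ e.
Proof. elim: e => [|e IH]; first by rewrite expr0 -phi1. by rewrite exprS -IH -phiM. Qed.
Lemma phi_fold (f : nat -> Ielt) s :
  phi (foldr Iadd Ielt_zero (map f s)) = \sum_(i <- s) phi (f i).
Proof. elim: s => [|i s IH]; first by rewrite big_nil phi0. by rewrite big_cons /= phiA IH. Qed.
Lemma phi_eval (P : {poly int}) x :
  phi (Ieval D P x) = \sum_(i < size P) sc _ _ ((P`_i)%:~R) * phi x ^+ i.
Proof.
rewrite /Ieval phi_fold -(big_mkord xpredT (fun i => sc _ _ ((P`_i)%:~R) * phi x ^+ i)).
rewrite /index_iota subn0; apply: eq_bigr => i _. by rewrite phiS phiX.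
Qed.
End Phi.


Section Field.
Variables (q : nat) (Hq : prime q) (Hodd : odd q).
Local Notation F := 'F_q.

Lemma intrF_eq (a b : int) : ((a%:~R : F) = b%:~R) <-> (a = b %[mod q])%Z.
Proof.
split=> [h|].
  by apply/eqP; rewrite eqz_mod_dvd (dvdz_pcharf (pchar_Fp Hq)) rmorphB /= h subrr.
by move/eqP; rewrite eqz_mod_dvd (dvdz_pcharf (pchar_Fp Hq)) rmorphB /= subr_eq0 => /eqP.
Qed.

Lemma fermat (a : F) : a ^+ q = a.
Proof. by rewrite -{2}(expf_card a) card_Fp. Qed.

Lemma q_gt2 : (2 < q)%N.
Proof. have := prime_gt1 Hq; case: q Hodd => [|[|[|]]] //. Qed.

Lemma two_neq0 : (2 : F) != 0.
Proof.
apply/negP => /eqP h.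
have : (q %| 2)%N by rewrite (dvdn_pcharf (pchar_Fp Hq)) h.
move/dvdn_leq => /(_ isT); have := q_gt2; lia.
Qed.

Lemma euler_nonsq (d : F) : (forall s : F, s ^+ 2 != d) -> d ^+ (q./2) = -1.
Proof.
move=> nsq.
have d0 : d != 0 by apply/negP => /eqP d0; move: (nsq 0); rewrite d0 expr0n.
have q2 := q_gt2.
have Hqh : q.-1 = ((q./2) * 2)%N.
  have := odd_double_half q; rewrite Hodd -mul2n; lia.
have fq1 (x : F) : x != 0 -> x ^+ q.-1 = 1.
  move=> x0; apply: (mulIf x0); rewrite mul1r -exprSr prednK ?fermat //; lia.
pose rs := enum (predC1 (0 : F)).
have : has (q.-1).-primitive_root rs.
  apply: has_prim_root.
  - lia.
  - apply/allP => x; rewrite mem_enum /= => x0; rewrite unity_rootE fq1 //.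
  - exact: enum_uniq.
  - by rewrite -cardE cardC1 card_Fp.
case/hasP => g _ prim_g.
have [[i _] /= Hi] := prim_rootP prim_g (fq1 d d0).
have : (d ^+ q./2) ^+ 2 = 1 by rewrite -exprM -Hqh fq1.
move/eqP; rewrite sqrf_eq1 => /orP [/eqP h1|/eqP //].
exfalso.
case/boolP: (odd i) => oi.
  move: h1; rewrite Hi -exprM => /eqP; rewrite -(prim_order_dvd prim_g) Hqh.
  have h0 : (0 < q./2)%N by move: Hqh q2; lia.
  rewrite [X in (_ %| X)%N]mulnC dvdn_pmul2l //.
  by rewrite dvdn2 oi.
move: (nsq (g ^+ (i./2))); rewrite -exprM Hi.
have -> : (i./2 * 2)%N = i by have := odd_double_half i; rewrite (negbTE oi) -mul2n; lia.
by rewrite eqxx.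
Qed.

Section Q.
Variables (c0 c1 : F).
Local Notation Q := (QR c0 c1).
Local Notation sc := (@sc _ c0 c1).
Definition tt : Q := (- c1, 2).
Definition dd : F := 4 * c0 + c1 ^+ 2.
Definition cj (y : Q) : Q := (y.1 + c1 * y.2, - y.2).
Definition al (y : Q) : F := y.1 + c1 * y.2 / 2.
Definition be (y : Q) : F := y.2 / 2.

Lemma ttE : tt * tt = sc dd.
Proof. rewrite qmulE /tt /sc /dd /=; congr pair; ring. Qed.

Lemma decomp (y : Q) : y = sc (al y) + sc (be y) * tt.
Proof.
case: y => a b; rewrite qaddE qmulE /al /be /sc /tt /=.
have h2 := two_neq0.
congr pair; field; exact: h2.
Qed.

Lemma cjE (y : Q) : cj y = sc (al y) - sc (be y) * tt.
Proof.
case: y => a b; rewrite qaddE qoppE qmulE /al /be /sc /tt /cj /=.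
have h2 := two_neq0.
congr pair; field; exact: h2.
Qed.

Lemma ycj (y : Q) : y * cj y = sc (y.1 ^+ 2 + c1 * y.1 * y.2 - c0 * y.2 ^+ 2).
Proof. case: y => a b; rewrite qmulE /sc /cj /=; congr pair; ring. Qed.

Lemma ycj2 (y : Q) : y * cj y = sc (al y ^+ 2 - be y ^+ 2 * dd).
Proof.
rewrite ycj /al /be /dd; congr (sc _); have h2 := two_neq0; field; exact: h2.
Qed.

Lemma pcharQ : q \in [pchar Q].
Proof. by rewrite inE Hq /= -scn (pchar_Fp_0 Hq) sc0. Qed.

Lemma frobD (u v : Q) : (u + v) ^+ q = u ^+ q + v ^+ q.
Proof.
apply: exprDn_pchar.
by rewrite (eq_pnat _ (pcharf_eq pcharQ)) pnat_id.
Qed.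

Definition ee : F := dd ^+ (q./2).

Lemma ttq : tt ^+ q = sc ee * tt.
Proof.
have Hq2 : q = ((q./2) * 2).+1.
  have := odd_double_half q; rewrite Hodd -mul2n; lia.
transitivity (tt ^+ ((q./2 * 2).+1)); first by rewrite -Hq2.
by rewrite exprS mulnC exprM expr2 ttE -scX mulrC.
Qed.

Lemma frob (y : Q) : y ^+ q = sc (al y) + sc (be y) * (sc ee * tt).
Proof.
by rewrite {1}(decomp y) frobD exprMn -!scX !fermat ttq.
Qed.

Lemma ee_cases : [\/ ee = 1, ee = -1 | dd = 0].
Proof.
case/boolP: (dd == 0) => [/eqP|d0]; first by constructor 3.
have Hqh : q.-1 = ((q./2) * 2)%N.
  have := odd_double_half q; rewrite Hodd -mul2n; lia.
have : ee ^+ 2 = 1.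
  rewrite /ee -exprM -Hqh; apply: (mulIf d0); rewrite mul1r -exprSr prednK ?fermat //.
  exact: prime_gt0.
move/eqP; rewrite sqrf_eq1 => /orP [/eqP|/eqP] h; [constructor 1 | constructor 2]; done.
Qed.

Lemma frob_cases (y : Q) : y * cj y = 1 ->
  [\/ y ^+ q.-1 = 1, y ^+ q.+1 = 1 | y ^+ (q * 2) = 1].
Proof.
move=> Hn; case: ee_cases => He.
- constructor 1.
  have Hy : y ^+ q = y by rewrite frob He sc1 mul1r -decomp.
  rewrite -[LHS]mulr1 -Hn mulrA -exprSr prednK ?Hy // prime_gt0 //.
- constructor 2.
  have Hy : y ^+ q = cj y by rewrite frob He scN sc1 mulN1r mulrN cjE.
  by rewrite exprSr Hy mulrC.
- constructor 3.
  have He0 : ee = 0 by rewrite /ee He expr0n; have := q_gt2; case: (q./2) (odd_double_half q) => //=; lia.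
  rewrite exprM frob He0 sc0 mul0r mulr0 addr0 -scX -Hn ycj2 He mulr0 subr0 //.
Qed.

Lemma nonsq_ee : (forall s : F, s ^+ 2 != dd) -> ee = -1.
Proof. move=> h; exact: euler_nonsq. Qed.

Lemma nonsq_cj (y : Q) : (forall s : F, s ^+ 2 != dd) -> y ^+ q = cj y.
Proof.
by move=> h; rewrite frob nonsq_ee // scN sc1 mulN1r mulrN cjE.
Qed.

Lemma nonsq_dom (z u : Q) : (forall s : F, s ^+ 2 != dd) -> z != 0 -> z * u = 0 -> u = 0.
Proof.
move=> nsq z0 zu.
set n := al z ^+ 2 - be z ^+ 2 * dd.
have n0 : n != 0.
  apply/negP => /eqP n0.
  case/boolP: (be z == 0) => [/eqP b0|b0].
    move: n0; rewrite /n b0 expr0n mul0r subr0 => /eqP; rewrite expf_eq0 /= => /eqP a0.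
    by move: z0; rewrite (decomp z) a0 b0 sc0 mul0r addr0 eqxx.
  move: (nsq (al z / be z)); rewrite expr_div_n.
  have -> : al z ^+ 2 = be z ^+ 2 * dd by apply/eqP; rewrite -subr_eq0 -/n n0.
  by rewrite mulrC mulrA mulVf ?expf_neq0 // mul1r eqxx.
have : sc n * u = 0 by rewrite -ycj2 mulrAC zu mul0r.
move=> h; rewrite -[u]mul1r -sc1 -(mulVf n0) scM -mulrA h mulr0 //.
Qed.
End Q.
End Field.


Lemma D1_div (D : int) : D1mod4 D -> ((D - 1) %/ 4)%Z * 4 = D - 1 /\ ((1 - D) %/ 4)%Z = - ((D - 1) %/ 4)%Z.
Proof.
move=> h.
have : (4 %| D - 1)%Z.
  apply/dvdz_mod0P; move: h; rewrite /D1mod4 => /eqP h.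
  by rewrite -modzDml h subrr.
case/dvdzP => k hk.
have -> : (1 - D) = (- k) * 4 by rewrite -opprB hk mulNr.
by rewrite hk !mulzK.
Qed.

Section Glue.
Variables (q : nat) (Hq : prime q) (Hodd : odd q) (D : int).
Local Notation F := 'F_q.
Local Notation ph := (@phi F D).
Local Notation c0 := ((cc0 D)%:~R : F).
Local Notation c1 := ((cc1 D)%:~R : F).

Lemma Icong_phi x y : Icong q x y <-> ph x = ph y.
Proof.
rewrite /phi /Icong; split.
  by case=> /(intrF_eq Hq) -> /(intrF_eq Hq) ->.
by case=> /(intrF_eq Hq) h1 /(intrF_eq Hq) h2.
Qed.

Lemma norm_int (a b : int) :
  (a%:~R : F) ^+ 2 + c1 * a%:~R * b%:~R - c0 * (b%:~R) ^+ 2 = (Inorm D (a, b))%:~R.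
Proof.
rewrite /Inorm /cc0 /cc1; case h: (D1mod4 D).
  have [_ ->] := D1_div h.
  by rewrite ?rmorphD ?rmorphM ?rmorphN ?rmorphXn /= ?rmorph1; ring.
by rewrite ?rmorphD ?rmorphB ?rmorphM ?rmorphN ?rmorphXn /= ?rmorph0; ring.
Qed.

Lemma norm_phi w : inG q D w -> ph w * cj (ph w) = 1.
Proof.
move=> /(intrF_eq Hq) h; rewrite ycj /=; case: w h => a b /= h.
by rewrite norm_int h rmorph1 sc1.
Qed.

Lemma dd_int : dd c0 c1 = (if D1mod4 D then D else 4 * D)%:~R.
Proof.
rewrite /dd /cc0 /cc1; case h: (D1mod4 D).
  have [h1 _] := D1_div h.
  set k := ((D - 1) %/ 4)%Z in h1 *.
  rewrite -[X in _ = X%:~R](subrK 1 D) -h1 rmorphD rmorphM /= rmorph1; ring.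
by rewrite rmorphM rmorph0 /=; ring.
Qed.

Lemma nonsq_D : legendre D q = -1 -> forall s : F, s ^+ 2 != D%:~R.
Proof.
rewrite /legendre; case: ifP => // _; case: ifP => // hx _ s.
apply/negP => /eqP hs; move/negbT: hx => /negP; apply.
have q0 := prime_gt0 Hq.
apply/existsP; exists (Ordinal (ltn_pmod (s : nat) q0)).
apply/eqP/(intrF_eq Hq); rewrite -hs rmorphXn /= -natz -/(_%:R).
by rewrite rmorph_nat (Fp_nat_mod Hq) natr_Zp.
Qed.

Lemma nonsq_dd : legendre D q = -1 -> forall s : F, s ^+ 2 != dd c0 c1.
Proof.
move=> hl s; rewrite dd_int; case: (D1mod4 D); first exact: nonsq_D.
apply/negP => /eqP hs; move: (nonsq_D hl (s / 2)); rewrite expr_div_n hs.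
have h2 := two_neq0 Hq Hodd.
have -> : (4 * D)%:~R / (2 : F) ^+ 2 = D%:~R.
  have e4 : (4 : F) = 2 * 2 by ring.
  have h4 : (4 : F) != 0 by rewrite e4 mulf_neq0.
  rewrite rmorphM /=; field; exact: h4.
by move=> /eqP.
Qed.
End Glue.


Lemma Phi_prime p : prime p -> 'Phi_p = \poly_(i < p) 1.
Proof.
move=> Hp.
have H1 : 'Phi_1 = 'X - 1.
  have := prod_Cyclotomic (isT : (0 < 1)%N).
  by rewrite (_ : divisors 1 = [:: 1%N]) // big_seq1 expr1.
have Hdiv : perm_eq (divisors p) [:: 1%N; p].
  apply: uniq_perm; first exact: divisors_uniq.
    by rewrite /= inE andbT eq_sym; have := prime_gt1 Hp; case: (p) => [|[|]].
  move=> x; rewrite -dvdn_divisors ?prime_gt0 // !inE.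
  case: (x =P 1%N) => [->|/eqP x1] /=; first by rewrite dvd1n.
  exact/(prime_nt_dvdP Hp x1)/eqP.
have := prod_Cyclotomic (prime_gt0 Hp).
rewrite (perm_big _ Hdiv) big_cons big_seq1 H1 => H.
have nz : ('X - 1 : {poly int}) != 0 by rewrite -polyC1 polyXsubC_eq0.
apply: (mulfI nz); rewrite H poly_def subrX1; congr (_ * _).
by apply: eq_bigr => i _; rewrite scale1r.
Qed.

Lemma Phi_prime_sum p : prime p -> 'Phi_p = \sum_(i < p) 'X^i.
Proof. move=> Hp; rewrite Phi_prime // poly_def; apply: eq_bigr => i _; by rewrite scale1r. Qed.

Section NatL.
Local Open Scope nat_scope.
Lemma pl_dvd (d M p l : nat) : prime p -> coprime M p -> (0 < l)%N ->
  (d %| M * p ^ l)%N -> ~~ (d %| M * p ^ l.-1)%N -> (p ^ l %| d)%N.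
Proof.
move=> Hp cop l0 dv ndv.
have M0 : (0 < M)%N.
  rewrite lt0n; apply/negP => /eqP M0; move: cop; rewrite M0 /coprime gcd0n => /eqP p1.
  by move: Hp; rewrite p1.
have d0 : (0 < d)%N.
  apply: dvdn_gt0 dv; by rewrite muln_gt0 M0 expn_gt0 prime_gt0.
rewrite pfactor_dvdn //; rewrite leqNgt; apply/negP => hlt.
move/negP: ndv; apply.
rewrite -(partnC p d0) mulnC.
apply: dvdn_mul.
  have cp : coprime (d`_p^') (p ^ l).
    have e : ((p ^ l)%N)`_p = (p ^ l)%N by rewrite p_part pfactorK.
    rewrite coprime_sym -e; exact: coprime_partC.
  rewrite -(Gauss_dvdr _ cp); apply: dvdn_trans (dvdn_part _ _) _; by rewrite mulnC.
rewrite p_part dvdn_exp2l //; lia.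
Qed.
End NatL.

Lemma gcd_pow (R : pzRingType) (y : R) a b : (0 < a)%N -> y ^+ a = 1 -> y ^+ b = 1 ->
  y ^+ (gcdn a b) = 1.
Proof.
move=> a0 ha hb; have [u _ /dvdnP [k hk]] := Bezoutl b a0.
have : y ^+ (gcdn a b + u * b) = 1 by rewrite hk mulnC exprM ha expr1n.
by rewrite exprD mulnC exprM hb expr1n mulr1.
Qed.


Lemma phi_Phi (q : nat) (D : int) p x : prime p ->
  @phi 'F_q D (Ieval D 'Phi_p x) = \sum_(i < p) (@phi 'F_q D x) ^+ i.
Proof.
move=> Hp; rewrite phi_eval.
have sz : size 'Phi_p = p by rewrite Phi_prime // size_poly_eq // oner_eq0.
rewrite -[in RHS]sz; apply: eq_bigr => i _.
have cf j : (j < p)%N -> 'Phi_p`_j = 1 by move=> hj; rewrite Phi_prime // coef_poly hj.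
have := ltn_ord i; rewrite {2}sz => hi.
rewrite cf //.
by rewrite rmorph1 sc1 mul1r.
Qed.

Lemma fwd (D : int) (N p m : nat) (w : Ielt) : prime N -> odd N -> prime p ->
  legendre D N = -1 -> inG N D w -> (m * p = N + 1)%N ->
  ~ Icong N (Ipow D w m) Ielt_one -> Icong N (Ieval D 'Phi_p (Ipow D w m)) Ielt_zero.
Proof.
move=> HN Nodd Hp jac inGw hmp ncong.
move: ncong; rewrite !(Icong_phi HN D) phiX phi1 phi0 (phi_Phi _ _ _ Hp) phiX => ncong.
set y := @phi _ D w in ncong *.
have Hn : y * cj y = 1 by exact: norm_phi.
have Hnsq := nonsq_dd HN Nodd jac.
have hy : y ^+ N.+1 = 1 by rewrite exprS (nonsq_cj HN Nodd _ Hnsq) Hn.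
set x := y ^+ m in ncong *.
have hx : x ^+ p = 1 by rewrite -exprM hmp addn1 hy.
apply: (nonsq_dom HN Nodd Hnsq (z := x - 1)).
  by rewrite subr_eq0; apply/eqP.
by rewrite -subrX1 hx subrr.
Qed.

Lemma cong_dvd (a b : int) (N q : nat) : (q %| N)%N -> (a = b %[mod N])%Z -> (a = b %[mod q])%Z.
Proof.
move=> hd /eqP; rewrite eqz_mod_dvd => h; apply/eqP; rewrite eqz_mod_dvd.
by apply: dvdz_trans h; rewrite dvdzE.
Qed.

Lemma bwd (D : int) (N p l M q : nat) (w : Ielt) : prime q -> (q %| N)%N -> odd N ->
  prime p -> odd p -> (0 < l)%N -> coprime M p -> (N + 1 = M * p ^ l)%N -> inG N D w ->
  Icong N (Ieval D 'Phi_p (Ipow D w (M * p ^ l.-1))) Ielt_zero -> (p ^ l + 1 <= q)%N.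
Proof.
move=> Hq qN Nodd Hp podd l0 cop hN inGw [hc1 hc2].
have qodd : odd q.
  case: (even_prime Hq) => // q2; by rewrite q2 dvdn2 Nodd in qN.
have hpl : (p ^ l = p ^ l.-1 * p)%N by rewrite -expnSr prednK.
have pq : p != q.
  apply/eqP => e; move: Hp podd cop hN hpl; rewrite e => Hp' _ _ hN' hpl'.
  have : (q %| N + 1)%N by rewrite hN' hpl' mulnA dvdn_mull.
  by rewrite dvdn_addr // dvdn1 => /eqP q1; move: Hq; rewrite q1.
have inGq : inG q D w by exact: cong_dvd qN inGw.
have hcq : Icong q (Ieval D 'Phi_p (Ipow D w (M * p ^ l.-1))) Ielt_zero.
  by split; apply: cong_dvd qN _.
move: hcq; rewrite (Icong_phi Hq D) phi0 (phi_Phi _ _ _ Hp) phiX => hcq.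
set y := @phi _ D w in hcq.
set m := (M * p ^ l.-1)%N in hcq.
have Hn : y * cj y = 1 by exact: norm_phi.
set x := y ^+ m in hcq.
have hx : x ^+ p = 1 by apply/eqP; rewrite -subr_eq0 subrX1 hcq mulr0.
have hx1 : x != 1.
  apply/eqP => e; move: hcq; rewrite e (eq_bigr (fun=> 1)) => [|i _]; last by rewrite expr1n.
  rewrite sumr_const card_ord -scn => /(sc_inj) /eqP.
  rewrite -(dvdn_pcharf (pchar_Fp Hq)) dvdn_prime2 // eq_sym => /eqP e2.
  by move/eqP: pq.
have hy : y ^+ (M * p ^ l) = 1 by rewrite hpl mulnA exprM hx.
have key E : (0 < E)%N -> y ^+ E = 1 -> (p ^ l %| E)%N.
  move=> E0 hE; have hg := gcd_pow E0 hE hy.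
  apply: dvdn_trans (dvdn_gcdl E (M * p ^ l)).
  apply: (pl_dvd Hp cop l0 (dvdn_gcdr _ _)); apply/negP => /dvdnP [k hk].
  by move/eqP: hx1; apply; rewrite /x /m hk mulnC exprM hg expr1n.
have q2 := q_gt2 Hq qodd.
have P3 : (2 < p ^ l)%N.
  have := q_gt2 Hp podd; have : (0 < p ^ l.-1)%N by rewrite expn_gt0 prime_gt0.
  rewrite hpl; clear; nia.
case: (frob_cases Hq qodd Hn) => hE.
- have q10 : (0 < q.-1)%N by move: q2; clear; lia.
  have hd := key _ q10 hE.
  have := dvdn_leq q10 hd; move: q2; clear; lia.
- have /dvdnP [j hj] := key _ (ltn0Sn _) hE.
  have oP : odd (p ^ l) by rewrite oddX podd orbT.
  case: j hj => [|[|j]] hj; first by [].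
    by rewrite mul1n in hj; move: oP; rewrite -hj /= qodd.
  move: hj P3; clear; nia.
- have q20 : (0 < q * 2)%N by move: q2; clear; lia.
  have hd := key _ q20 hE.
  have : (p %| q * 2)%N.
    apply: dvdn_trans hd; rewrite -{1}(expn1 p) dvdn_exp2l //.
  rewrite Euclid_dvdM // dvdn_prime2 // (negbTE pq) /= => /dvdn_leq.
  have := q_gt2 Hp podd; clear; lia.
Qed.

Unset Implicit Arguments.
Set Strict Implicit.

Theorem theorem1p1 (D : int) (p k l cD : nat) (w : Ielt) :
  squarefree_int D -> prime p -> odd p -> (0 < k)%N -> (0 < l)%N -> (0 < cD)%N ->
  coprime (cD * k) p ->
  let N := (cD * k * p ^ l - 1)%N in
  odd N -> (cD * k < p ^ l)%N -> jacobi D N = -1 ->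
  inG N D w ->
  ~ Icong N (Ipow D w ((N + 1) %/ p)) Ielt_one ->
  (prime N <-> Icong N (Ieval D 'Phi_p (Ipow D w ((N + 1) %/ p))) Ielt_zero).
Proof.
move=> _ Hp podd k0 l0 cD0 cop N Nodd lt jac inGw ncong.
have hpl : (p ^ l = p ^ l.-1 * p)%N by rewrite -expnSr prednK.
have p3 := q_gt2 Hp podd.
have Pl0 : (0 < p ^ l.-1)%N by rewrite expn_gt0 prime_gt0.
have Mk0 : (0 < cD * k)%N by rewrite muln_gt0 cD0 k0.
have hN : (N + 1 = cD * k * p ^ l)%N.
  rewrite /N hpl; move: Mk0 Pl0 p3; clear; nia.
have hm : ((N + 1) %/ p = cD * k * p ^ l.-1)%N.
  by rewrite hN hpl mulnA mulnK // prime_gt0.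
rewrite hm in ncong *.
clearbody N.
split.
- move=> HN; apply: fwd => //.
    by move: jac; rewrite /jacobi primes_prime // big_seq1 logn_prime // eqxx expr1.
  by rewrite hN hpl mulnA.
- move=> hc; case/boolP: (prime N) => // nN; exfalso.
  have key q : prime q -> (q %| N)%N -> (p ^ l + 1 <= q)%N.
    by move=> Hq qN; exact: (bwd Hq qN Nodd Hp podd l0 cop hN inGw hc).
  have N1 : (1 < N)%N by move: hN Mk0 Pl0 p3; rewrite hpl; clear; nia.
  have Hq := pdiv_prime N1.
  have qN := pdiv_dvd N.
  set q := pdiv N in Hq qN.
  have /dvdnP [r hr] := qN.
  have r1 : (1 < r)%N.
    case: r hr => [|[|r]] hr //; first by move: N1; rewrite hr.
    by move: nN; rewrite hr mul1n Hq.
  have Hq' := pdiv_prime r1.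
  have q'N : (pdiv r %| N)%N by rewrite hr dvdn_mulr // pdiv_dvd.
  have q'r : (pdiv r <= r)%N by apply: dvdn_leq; [move: r1; clear; lia | exact: pdiv_dvd].
  have h1 := key _ Hq qN.
  have h2 := key _ Hq' q'N.
  move: hN lt hr h1 h2 q'r; clear; nia.
Qed.
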